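(* Let $Q$ be a state of a medium, and let $G$ be the directed graph whose vertices are the states of the medium, with an arc from $S$ to $S'$ whenever $St=S'\neq S$ for some token $t$ belonging to the content $\hat Q$ of $Q$. Then $Q$ is the unique sink of $G$.
   Context: A medium consists of a finite set of states and a set of tokens, each token $t$ acting as a function on states, written $S\mapsto St$. Tokens concatenate into messages (words); $Sw$ denotes the state obtained by applying the tokens of $w$ successively to $S$. A token $t$ has a reverse $\tilde t$ if for any two distinct states $S\neq Q$, $St=Q$ iff $Q\tilde t=S$. A message is inconsistent if it contains some token together with its reverse, and consistent otherwise. A message $w$ is vacuous if for each token $t$ it contains equally many copies of $t$ and $\tilde t$. A token $t$ is effective for $S$ if $St\neq S$; a message is stepwise effective for $S$ if each successive token is effective for the state it is applied to. The axioms of a medium are: (1) each token has a unique reverse; (2) for any two distinct states $S,Q$ there is a consistent message $w$ with $Sw=Q$; (3) if $w$ is stepwise effective for $S$, then $Sw=S$ iff $w$ is vacuous; (4) if $Sw=Qz$, $w$ is stepwise effective for $S$, $z$ is stepwise effective for $Q$, and both $w,z$ are consistent, then $wz$ is consistent. A straight path from $S$ to $Sw$ is a consistent message $w$ that is stepwise effective for $S$. The content $\hat Q$ of a state $Q$ is the set of all tokens occurring in messages $w$ such that $Sw=Q$ is a straight path for some state $S$. (For every token $t$, exactly one of $t,\tilde t$ belongs to $\hat Q$, so $\hat Q$ and its complement form an orientation, the content orientation of $Q$.) *)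

(* Defs.v *)
From mathcomp Require Import all_boot.
Set Implicit Arguments. Unset Strict Implicit. Unset Printing Implicit Defensive.

Section Medium.
Variables (St Tok : finType) (act : St -> Tok -> St).

Definition apply_msg (S : St) (w : seq Tok) : St := foldl act S w.

Definition is_reverse (t u : Tok) : Prop :=
  forall S Q : St, S <> Q -> (act S t = Q <-> act Q u = S).

Definition inconsistent (w : seq Tok) : Prop :=
  exists t u, [/\ is_reverse t u, t \in w & u \in w].
Definition consistent (w : seq Tok) : Prop := ~ inconsistent w.

Definition vacuous (w : seq Tok) : Prop :=
  forall t u, is_reverse t u -> count_mem t w = count_mem u w.

Definition effective (S : St) (t : Tok) : Prop := act S t <> S.

Fixpoint stepwise_effective (S : St) (w : seq Tok) : Prop :=
  match w with
  | [::] => True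
  | t :: w' => effective S t /\ stepwise_effective (act S t) w'
  end.

(* the medium axioms; tokens form a *set* of functions on states,
   so distinct tokens are distinct functions *)
Definition is_medium : Prop :=
  [/\ (forall t t' : Tok, (forall S, act S t = act S t') -> t = t'),
      (* (1) unique reverse *)
      (forall t, exists u, is_reverse t u /\ forall u', is_reverse t u' -> u' = u),
      (* (2) *)
      (forall S Q : St, S <> Q -> exists w, consistent w /\ apply_msg S w = Q),
      (* (3) *)
      (forall S w, stepwise_effective S w -> (apply_msg S w = S <-> vacuous w))
    & (* (4) *)
      (forall S Q w z, apply_msg S w = apply_msg Q z ->
         stepwise_effective S w -> stepwise_effective Q z ->
         consistent w -> consistent z -> consistent (w ++ z))].

Definition straight_path (S : St) (w : seq Tok) : Prop :=
  consistent w /\ stepwise_effective S w.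

Definition content (Q : St) (t : Tok) : Prop :=
  exists S w, [/\ straight_path S w, apply_msg S w = Q & t \in w].

Definition arcG (Q : St) (S S' : St) : Prop :=
  exists t, [/\ content Q t, act S t = S' & S' <> S].

Definition is_sinkG (Q : St) (S : St) : Prop := forall S', ~ arcG Q S S'.

End Medium.

(* Main.v *)
Require Import Defs.
From mathcomp Require Import all_boot.
Set Implicit Arguments. Unset Strict Implicit.

Section Aux.
Variables (St Tok : finType) (act : St -> Tok -> St).

Fixpoint red (S : St) (w : seq Tok) : seq Tok :=
  match w with
  | [::] => [::]
  | t :: w' => if act S t == S then red S w' else t :: red (act S t) w'
  end.

Lemma red_apply S w : apply_msg act S (red S w) = apply_msg act S w.
Proof.
elim: w S => [|t w IH] S //=.
case: eqP => [E|_] /=; last by apply: IH.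
by rewrite IH /apply_msg /= E.
Qed.

Lemma red_eff S w : stepwise_effective act S (red S w).
Proof.
elim: w S => [|t w IH] S //=.
case: eqP => [E|NE] /=; first exact: IH.
by split.
Qed.

Lemma red_sub S w : {subset red S w <= w}.
Proof.
elim: w S => [|t w IH] S //= x.
case: eqP => _ H; first by rewrite in_cons (IH _ _ H) orbT.
move: H; rewrite !in_cons => /orP [->//|H]; by rewrite (IH _ _ H) orbT.
Qed.

Lemma rev_sym t u : is_reverse act t u -> is_reverse act u t.
Proof.
move=> H S Q NE; split => E.
- by apply/(H Q S) => //; move=> E'; apply: NE.
- by apply/(H Q S) => //; move=> E'; apply: NE.
Qed.
End Aux.

Theorem mainTheorem2 (St Tok : finType) (act : St -> Tok -> St)
  (Hmed : is_medium act) (Q : St) :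
  is_sinkG act Q Q /\ (forall S : St, is_sinkG act Q S -> S = Q).
Proof.
case: Hmed => _ H1 H2 _ H4.
split.
- move=> Q' [t [[S [w [[Hc He] Hw Ht]]] Et NE]].
  have [u [Hu Uu]] := H1 t.
  have HQu : act Q' u = Q by apply/(Hu Q Q') => //; move=> E; apply: NE; rewrite E.
  have Hcu : consistent act [:: u].
    move=> [a [b [Hab]]]; rewrite !inE => /eqP Ea /eqP Eb; subst a b.
    have [r [_ Ur]] := H1 u.
    have Etu : t = u by rewrite (Ur t (rev_sym Hu)) (Ur u Hab).
    by apply: Hc; exists t, t; split => //; rewrite {2}Etu.
  have Heq : apply_msg act S w = apply_msg act Q' [:: u] by rewrite Hw; symmetry; exact: HQu.
  have := H4 S Q' w [:: u] Heq He.
  have Heu : stepwise_effective act Q' [:: u].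
    split => //; rewrite /effective HQu => E; apply: NE; by rewrite E.
  move=> /(_ Heu Hc Hcu); apply.
  exists t, u; split => //; by rewrite mem_cat ?Ht ?inE ?eqxx ?orbT.
- move=> S Hs; apply/eqP; apply/negPn/negP => /eqP NE.
  have [w [Hc Hw]] := H2 S Q NE.
  set w' := red act S w.
  have Hw' : apply_msg act S w' = Q by rewrite red_apply.
  have He := red_eff act S w.
  have Hc' : consistent act w'.
    move=> [a [b [Hab Ha Hb]]]; apply: Hc; exists a, b; split => //;
    exact: (red_sub Ha) || exact: (red_sub Hb).
  move: Hw' He Hc'; rewrite -/w'.
  case: w' => [|t w''] Hw' He Hc'; first by apply: NE.
  apply: (Hs (act S t)); exists t; split.
  + by exists S, (t :: w''); split => //; rewrite inE eqxx.
  + by [].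
  + by case: He.
Qed.
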